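(* Let $G$ be a finite group and let $\phi=a_1\chi_1+\cdots+a_q\chi_q$ be a virtual character of $G$, where $a_i\in\mathbb{R}$ and $\chi_i$ are irreducible complex characters of $G$ with $n_i=\chi_i(1)$, $i=1,\dots,q$. Then for every $g\in G$, $$\mathbb{E}(\xi_{g,\phi})=\sum_{i=1}^q \frac{a_i}{n_i^2}\,\mathrm{Re}(\chi_i(g)).$$ If $\phi$ is non-negative, then for every $g\in G$, $$c(g)\;\le\;\frac{\mathbb{E}(\xi_{g,\phi})}{\phi(1)}\;=\;\frac{(a_1/n_1^2)\mathrm{Re}(\chi_1(g))+\cdots+(a_q/n_q^2)\mathrm{Re}(\chi_q(g))}{a_1n_1+\cdots+a_qn_q},$$ and in particular $$c(G)=c(1)\;\le\;\frac{a_1/n_1+\cdots+a_q/n_q}{a_1n_1+\cdots+a_qn_q}.$$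
   Context: $G$ is a finite group of order $m$; $G\times G$ carries the uniform probability measure (mass $1/m^2$ per point) and $\mathbb{E}$ denotes expectation with respect to it. For $g\in G$, $c(g)=|\{(x,y)\in G\times G:[x,y]=g\}|/|G\times G|$ and $c(G)=c(1)$. For a virtual character $\phi$ and $g\in G$, $\xi_{g,\phi}$ is the real random variable on $G\times G$ given by $\xi_{g,\phi}(a,b)=\mathrm{Re}\big(\phi([a,b]^{-1}g)\big)=\sum_i a_i\mathrm{Re}(\chi_i([a,b]^{-1}g))$. A virtual character $\phi=\sum_{\chi\in\mathrm{Irr}(G)}a_\chi\chi$ is called non-negative if (a) $\mathrm{Re}(\phi(h))\ge0$ for all $h\in G$, and (b) all coefficients $a_\chi$ are non-negative real numbers and at least one is non-zero. *)

(* Defs.v *)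
From HB Require Import structures.
From mathcomp Require Import all_boot all_order all_algebra all_fingroup all_solvable all_field all_character.
Set Implicit Arguments. Unset Strict Implicit. Unset Printing Implicit Defensive.
Import Order.TTheory GRing.Theory Num.Theory.
Local Open Scope ring_scope.

Definition vchar_of (gT : finGroupType) (G : {group gT}) (a : Iirr G -> algC) : 'CF(G) :=
  \sum_(i : Iirr G) a i *: 'chi[G]_i.

Definition xi (gT : finGroupType) (G : {group gT}) (phi : 'CF(G)) (g x y : gT) : algC :=
  'Re (phi (([~ x, y])^-1 * g)%g).

(* Expectation w.r.t. the uniform probability on G x G. *)
Definition Exi (gT : finGroupType) (G : {group gT}) (phi : 'CF(G)) (g : gT) : algC :=
  (#|G| ^ 2)%:R^-1 * \sum_(x in G) \sum_(y in G) xi phi g x y.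

Definition cprob (gT : finGroupType) (G : {group gT}) (g : gT) : algC :=
  #|[set p in setX G G | ([~ p.1, p.2])%g == g]|%:R / (#|G| ^ 2)%:R.

Definition nonneg_vchar (gT : finGroupType) (G : {group gT}) (a : Iirr G -> algC) : Prop :=
  (forall h, h \in G -> 0 <= 'Re (vchar_of a h)) /\
  (forall i, 0 <= a i) /\ (exists i, a i != 0).

(* Main.v *)
Require Import Defs.
From HB Require Import structures.
From mathcomp Require Import all_boot all_order all_algebra all_fingroup all_solvable all_field all_character.
From mathcomp Require Import ring.
Set Implicit Arguments. Unset Strict Implicit. Unset Printing Implicit Defensive.
Import Order.TTheory GRing.Theory Num.Theory.
Local Open Scope ring_scope.

Section S.
Variables (gT : finGroupType) (G : {group gT}).

Lemma chi_swap (phi : 'CF(G)) u v : u \in G -> phi (u * v)%g = phi (v * u)%g.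
Proof.
move=> Gu; rewrite -(cfunJ phi (u * v)%g Gu); congr (phi _).
by rewrite conjgE !mulgA mulVg mul1g.
Qed.

Lemma sum_conj_irr (i : Iirr G) a b : a \in G -> b \in G ->
  \sum_(y in G) 'chi_i (a * b ^ y)%g = #|G|%:R * 'chi_i a * 'chi_i b / 'chi_i 1%g.
Proof.
move=> Ga Gb.
pose F x := if x \in G then \sum_(y in G) 'chi_i (x * b ^ y)%g else 0.
have cF : is_class_fun <<G>>%g (finfun F).
  rewrite genGid; apply: intro_class_fun => [x z Gx Gz|x nGx]; last by rewrite /F (negbTE nGx).
  rewrite /F groupJ // Gx; symmetry.
  rewrite (reindex_inj (mulIg z^-1%g)) /=.
  apply: eq_big => [y|y Gy]; first by rewrite groupMr ?groupV.
  rewrite -(cfunJ _ (x ^ z * b ^ y)%g (groupVr Gz)) conjMg -conjgM mulgV conjg1 -conjgM //.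
pose f : 'CF(G) := Cfun 0 cF.
have fE x : f x = F x by rewrite cfunE.
have dot j : '[f, 'chi_j] = (i == j)%:R * (#|G|%:R * 'chi_i b / 'chi_i 1%g).
  rewrite cfdotE.
  under eq_bigr => x Gx do rewrite fE /F Gx -irr_inv big_distrl /=.
  rewrite exchange_big /= big_distrr /=.
  under eq_bigr => y Gy do rewrite generalized_orthogonality_relation (cfunJ _ _ Gy).
  by rewrite sumr_const -mulr_natr; ring.
have := congr1 (fun phi : 'CF(G) => phi a) (cfun_sum_cfdot f).
rewrite fE /F Ga => ->; rewrite sum_cfunE (bigD1 i) //= big1 => [|j nij]; last first.
  by rewrite cfunE dot eq_sym (negbTE nij) mul0r mul0r.
rewrite addr0 cfunE dot eqxx mul1r.
ring.
Qed.

Lemma sum_comm_irr (i : Iirr G) g : g \in G ->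
  \sum_(x in G) \sum_(y in G) 'chi_i (([~ x, y])^-1 * g)%g
  = (#|G| ^ 2)%:R * 'chi_i g / ('chi_i 1%g) ^+ 2.
Proof.
move=> Gg.
have e x y : (([~ x, y])^-1 * g = (x^-1) ^ y * (x * g))%g.
  by rewrite /commg invMg invgK conjVg !mulgA.
transitivity (\sum_(x in G) #|G|%:R * 'chi_i (x * g)%g * 'chi_i x^-1%g / 'chi_i 1%g).
  apply: eq_bigr => x Gx; rewrite -sum_conj_irr ?groupM ?groupV //.
  by apply: eq_bigr => y Gy; rewrite e chi_swap // groupM.
have := generalized_orthogonality_relation g i i; rewrite eqxx mul1r => GO.
have nG : #|G|%:R != 0 :> algC by exact: neq0CG.
have -> : \sum_(x in G) #|G|%:R * 'chi_i (x * g)%g * 'chi_i x^-1%g / 'chi_i 1%g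
   = #|G|%:R / 'chi_i 1%g * \sum_(x in G) 'chi_i (x * g)%g * 'chi_i x^-1%g.
  by rewrite big_distrr; apply: eq_bigr => x _ /=; rewrite -!mulrA; congr (_ * _); rewrite [RHS]mulrC mulrA.
have -> : \sum_(x in G) 'chi_i (x * g)%g * 'chi_i x^-1%g = #|G|%:R * ('chi_i g / 'chi_i 1%g).
  by rewrite -GO mulrA mulfV // mul1r.
rewrite natrX; field; exact: irr1_neq0.
Qed.
End S.

Lemma vcharE (gT : finGroupType) (G : {group gT}) (a : Iirr G -> algC) h :
  vchar_of a h = \sum_i a i * 'chi[G]_i h.
Proof. by rewrite /vchar_of sum_cfunE; apply: eq_bigr => i _; rewrite cfunE. Qed.

Lemma real_irr1 (gT : finGroupType) (G : {group gT}) (i : Iirr G) : 'chi[G]_i 1%g \is Num.real.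
Proof. exact/gtr0_real/irr1_gt0. Qed.

Lemma ReMl' (x z : algC) : x \is Num.real -> 'Re (x * z) = x * 'Re z.
Proof. by move=> Rx; apply: (ReMl Rx). Qed.
Lemma ReMr' (x z : algC) : x \is Num.real -> 'Re (z * x) = 'Re z * x.
Proof. by move=> Rx; apply: (ReMr Rx). Qed.

Lemma sumRe (gT : finGroupType) (G : {group gT}) (a : Iirr G -> algC) g :
  (forall i, a i \is Num.real) -> g \in G ->
  \sum_(x in G) \sum_(y in G) xi (vchar_of a) g x y
  = (#|G| ^ 2)%:R * \sum_(i : Iirr G) a i / ('chi[G]_i 1%g) ^+ 2 * 'Re ('chi[G]_i g).
Proof.
move=> Ra Gg; rewrite /xi.
under eq_bigr => x _ do rewrite -raddf_sum.
rewrite -raddf_sum.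
under eq_bigr => x _ do under eq_bigr => y _ do rewrite vcharE.
under eq_bigr => x _ do rewrite exchange_big.
rewrite exchange_big /=.
under eq_bigr => i _.
  under eq_bigr => x _ do rewrite -big_distrr.
  rewrite -big_distrr /= sum_comm_irr //.
  over.
rewrite raddf_sum big_distrr; apply: eq_bigr => i _ /=.
have Rc : ('chi_i 1%g ^+ 2)^-1 \is Num.real by rewrite rpredV rpredX // real_irr1.
rewrite (ReMl' _ (Ra i)) (ReMr' _ Rc) (ReMl' _ (realn _ _)).
rewrite natrX; ring.
Qed.

Unset Implicit Arguments.
Set Strict Implicit.
Set Printing Implicit Defensive.

Theorem theorem1 (gT : finGroupType) (G : {group gT}) (a : Iirr G -> algC) :
  (forall i, a i \is Num.real) ->
  (forall g, g \in G ->
     Exi (vchar_of a) g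
     = \sum_(i : Iirr G) a i / ('chi[G]_i 1%g) ^+ 2 * 'Re ('chi[G]_i g)) /\
  (nonneg_vchar a ->
     (forall g, g \in G ->
        cprob G g <= Exi (vchar_of a) g / vchar_of a 1%g /\
        Exi (vchar_of a) g / vchar_of a 1%g
        = (\sum_(i : Iirr G) a i / ('chi[G]_i 1%g) ^+ 2 * 'Re ('chi[G]_i g))
          / (\sum_(i : Iirr G) a i * 'chi[G]_i 1%g)) /\
     cprob G 1%g
       <= (\sum_(i : Iirr G) a i / 'chi[G]_i 1%g)
          / (\sum_(i : Iirr G) a i * 'chi[G]_i 1%g)).
Proof.
move=> Ra.
have nG : (#|G| ^ 2)%:R != 0 :> algC by rewrite natrX expf_neq0 // neq0CG.
have part1 g : g \in G -> Exi (vchar_of a) g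
     = \sum_(i : Iirr G) a i / ('chi[G]_i 1%g) ^+ 2 * 'Re ('chi[G]_i g).
  by move=> Gg; rewrite /Exi sumRe // mulKf.
split=> // [[nnphi [a_ge0 [k ak]]]].
set p := vchar_of a 1%g.
have p_gt0 : 0 < p.
  have h1 : 0 < a k * 'chi_k 1%g.
    by rewrite mulr_gt0 ?irr1_gt0 // lt_def ak a_ge0.
  have h2 : 0 <= \sum_(i | i != k) a i * 'chi_i 1%g.
    by apply: sumr_ge0 => i _; rewrite mulr_ge0 ?a_ge0 // ltW ?irr1_gt0.
  rewrite /p vcharE (bigD1 k) //=; apply: (lt_le_trans h1); rewrite lerDl; exact: h2.
have Rep : 'Re p = p by apply/Creal_ReP/gtr0_real.
have part2 g : g \in G -> cprob G g <= Exi (vchar_of a) g / p.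
  move=> Gg.
  set S := [set q in setX G G | ([~ q.1, q.2])%g == g].
  have key : #|S|%:R * p <= \sum_(x in G) \sum_(y in G) xi (vchar_of a) g x y.
    rewrite pair_big /= (bigID (mem S)) /=.
    have -> : \sum_(i | (i.1 \in G) && (i.2 \in G) && (i \in S)) xi (vchar_of a) g i.1 i.2
             = \sum_(i in S) p.
      apply: eq_big => [q|q]; first by rewrite !inE andb_idl // => /andP[].
      rewrite !inE => /andP[_ /andP[_ /eqP <-]]; by rewrite /xi mulVg.
    rewrite sumr_const mulr_natl lerDl; apply: sumr_ge0 => q /andP[/andP[G1 G2] _].
    by apply: nnphi; rewrite groupM ?groupV ?groupR.
  have N0 : 0 < (#|G| ^ 2)%:R :> algC by rewrite ltr0n expn_gt0 cardG_gt0.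
  rewrite /cprob /Exi -/S ler_pdivrMr //.
  have -> : forall T : algC, (#|G| ^ 2)%:R^-1 * T / p * (#|G| ^ 2)%:R = T / p.
    by move=> T; field; rewrite neq0CG andbT lt0r_neq0.
  by rewrite ler_pdivlMr.
split.
  move=> g Gg; split; first exact: part2.
  by rewrite part1 // /p vcharE.
apply: (le_trans (part2 1%g (group1 G))); rewrite part1 // /p vcharE.
rewrite le_eqVlt; apply/orP; left; apply/eqP; congr (_ / _); apply: eq_bigr => i _.
have /Creal_ReP -> := real_irr1 i.
have := irr1_neq0 i; move: ('chi_i 1%g) => c nc; field; exact: nc.
Qed.
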